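(* For every zero-set $\mathcal Z$, $$\tfrac14|\mathcal Z|\le \gamma(\mathcal Z)\le |\mathcal Z|.$$
   Context: Let $\mathbb Z_+=\{0,1,2,\dots\}$ and, for positive integers $a,b$, let $R_{a,b}=([0,a-1]\times[0,b-1])\cap\mathbb Z_+^2$. A (discrete) zero-set is a set $\mathcal Z\subseteq\mathbb Z_+^2$ that is a union of rectangles $R_{a,b}$ (equivalently, $(u,v)\in\mathcal Z$ implies $\{0,\dots,u\}\times\{0,\dots,v\}\subseteq\mathcal Z$); here $\mathcal Z$ is finite, i.e. a Young diagram. For $A\subseteq\mathbb Z_+^2$ and $x\in\mathbb Z_+^2$ let $\mathrm{row}(x,A)$ (resp. $\mathrm{col}(x,A)$) be the number of points of $A$ on the horizontal (resp. vertical) line through $x$. The neighborhood growth transformation is $\mathcal T(A)=A\cup\{x\in\mathbb Z_+^2\setminus A:(\mathrm{row}(x,A),\mathrm{col}(x,A))\notin\mathcal Z\}$. A set $A$ spans if $\bigcup_{t\ge0}\mathcal T^t(A)=\mathbb Z_+^2$. $\gamma(\mathcal Z)$ is the minimum cardinality of a finite spanning set. *)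

(* Defs.v *)
From mathcomp Require Import all_boot.
Set Implicit Arguments. Unset Strict Implicit. Unset Printing Implicit Defensive.

(* Points of Z_+^2 are pairs (x.1, x.2) of naturals.  Possibly infinite subsets
   of Z_+^2 are predicates [pt -> Prop]. *)
Definition pt := (nat * nat)%type.
Definition pset := pt -> Prop.

(* A (finite, discrete) zero-set: a duplicate-free list of points that is
   downward closed (a Young diagram).  Its cardinality is [size Z]. *)
Definition zero_set (Z : seq pt) : Prop :=
  uniq Z /\
  forall u v, (u, v) \in Z -> forall i j, i <= u -> j <= v -> (i, j) \in Z.

Definition has_card (P : pset) (n : nat) : Prop :=
  exists s : seq pt, uniq s /\ size s = n /\ forall y, y \in s <-> P y.

Definition row_is (A : pset) (x : pt) (n : nat) : Prop :=
  has_card (fun y => A y /\ y.2 = x.2) n.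

Definition col_is (A : pset) (x : pt) (n : nat) : Prop :=
  has_card (fun y => A y /\ y.1 = x.1) n.

(* (row(x,A), col(x,A)) \in Z  (false if either count is infinite,
   since Z is finite). *)
Definition rowcol_in (Z : seq pt) (A : pset) (x : pt) : Prop :=
  exists u v, (u, v) \in Z /\ row_is A x u /\ col_is A x v.

Definition growT (Z : seq pt) (A : pset) : pset :=
  fun x => A x \/ (~ A x /\ ~ rowcol_in Z A x).

Definition growT_iter (Z : seq pt) (t : nat) (A : pset) : pset :=
  Nat.iter t (growT Z) A.

Definition spans (Z : seq pt) (A : seq pt) : Prop :=
  forall x : pt, exists t, growT_iter Z t (fun y => y \in A) x.

(* Main.v *)
Require Import Defs.
From mathcomp Require Import all_boot zify.
From Stdlib Require Import Classical ClassicalEpsilon.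
Set Implicit Arguments. Unset Strict Implicit. Unset Printing Implicit Defensive.

Definition dec (P : Prop) : bool := if excluded_middle_informative P then true else false.
Lemma decR (P : Prop) : reflect P (dec P).
Proof. rewrite /dec; case: excluded_middle_informative => h; by constructor. Qed.

Lemma count_sum T (P : pred T) s : count P s = \sum_(i <- s) P i.
Proof. elim: s => [|x s IH]; by rewrite ?big_nil ?big_cons //= IH. Qed.

Lemma count_lt_iota k X : count (fun x => x < k) (iota 0 X) <= k.
Proof.
rewrite -size_filter; apply: (@leq_trans (size (iota 0 k))); last by rewrite size_iota.
apply: uniq_leq_size.
  by rewrite filter_uniq ?iota_uniq.
by move=> x; rewrite mem_filter !mem_iota /= => /andP[-> _].
Qed.

Definition bnd (A : seq pt) := sumn [seq (q.1 + q.2).+1 | q <- A].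
Lemma bnd_ok A p : p \in A -> p.1 < bnd A /\ p.2 < bnd A.
Proof.
elim: A => [//|q A IH]; rewrite in_cons => /orP[/eqP->|/IH [h1 h2]].
  rewrite /bnd /=; lia.
rewrite /bnd /= in h1 h2 *; lia.
Qed.

Lemma iter_mono Z (A : pset) t y : growT_iter Z t A y -> growT_iter Z t.+1 A y.
Proof. by move=> h; left. Qed.

Lemma iter_mono' Z (A : pset) t t' y : t <= t' -> growT_iter Z t A y -> growT_iter Z t' A y.
Proof.
move=> /subnK <-; elim: (t' - t) => [//|d IH] h; rewrite addSn; apply: iter_mono; exact: IH.
Qed.

Lemma spans_self Z : zero_set Z -> spans Z Z.
Proof.
move=> [uZ dZ].
pose S k := growT_iter Z k (fun y => y \in Z).
have inS : forall k y, y \in Z -> S k y.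
  move=> k y hy; apply: (@iter_mono' _ _ 0); first by [].
  by [].
suff full : forall k b i, b < k -> S k (i, b).
  move=> [i b]; exists b.+1; exact: (full b.+1 b i (ltnSn b)).
elim=> [//|k IH] b i hb.
have hS : forall b i, b < k -> S k.+1 (i,b) by move=> b' i' h'; apply: iter_mono; exact: IH.
rewrite ltnS leq_eqVlt in hb; case/orP: hb => [/eqP->|]; last exact: hS.
have ex : exists a, (a, k) \notin Z.
  exists (size Z); apply/negP => hin.
  have : size [seq (a', k) | a' <- iota 0 (size Z).+1] <= size Z.
    apply: uniq_leq_size.
      rewrite map_inj_uniq ?iota_uniq // => a1 a2 [] //.
    move=> p /mapP[a' ha' ->]; apply: (dZ _ _ hin) => //.
    by rewrite mem_iota in ha'; lia.
  by rewrite size_map size_iota ltnn.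
case: (ex_minnP ex) => L hL minL.
have rowZ : forall a, a < L -> (a, k) \in Z.
  move=> a ha; apply/negPn/negP => hn; have := minL _ hn; lia.
case: (classic (S k (i, k))) => hik; first by left.
right; split=> // -[u [v [huv [[s [us [ss hs]]] [s' [us' [ss' hs']]]]]]].
have Lu : L <= u.
  rewrite -ss -(size_iota 0 L) -(size_map (fun a => (a, k))).
  apply: uniq_leq_size; first by rewrite map_inj_uniq ?iota_uniq // => a1 a2 [].
  move=> p /mapP[a ha ->]; apply/hs; split=> //; apply: inS; apply: rowZ.
  by rewrite mem_iota in ha.
have kv : k <= v.
  rewrite -ss' -(size_iota 0 k) -(size_map (fun b => (i, b))).
  apply: uniq_leq_size; first by rewrite map_inj_uniq ?iota_uniq // => a1 a2 [].
  move=> p /mapP[b0 hb ->]; apply/hs'; split=> //; apply: IH.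
  by rewrite mem_iota in hb.
by move: hL; rewrite (dZ _ _ huv L k Lu kv).
Qed.

Definition rdeg (A : seq pt) j := count (fun p : pt => p.2 == j) A.
Definition cdeg (A : seq pt) i := count (fun p : pt => p.1 == i) A.
Definition fA A a := count (fun j => a < rdeg A j) (iota 0 (bnd A)).
Definition gA A b := count (fun i => b < cdeg A i) (iota 0 (bnd A)).

Lemma cnt_row A j : count (fun i => (i,j) \in A) (iota 0 (bnd A)) <= rdeg A j.
Proof.
rewrite -size_filter /rdeg -size_filter -(size_map (fun i => (i, j))).
apply: uniq_leq_size.
  by rewrite map_inj_uniq ?filter_uniq ?iota_uniq // => a1 a2 [].
by move=> p /mapP[i]; rewrite mem_filter => /andP[h _] ->; rewrite mem_filter /= eqxx.
Qed.

Lemma cnt_col A i : count (fun j => (i,j) \in A) (iota 0 (bnd A)) <= cdeg A i.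
Proof.
rewrite -size_filter /cdeg -size_filter -(size_map (fun j => (i, j))).
apply: uniq_leq_size.
  by rewrite map_inj_uniq ?filter_uniq ?iota_uniq // => a1 a2 [].
by move=> p /mapP[j]; rewrite mem_filter => /andP[h _] ->; rewrite mem_filter /= eqxx.
Qed.

Lemma cdeg_bnd A i : 0 < cdeg A i -> i < bnd A.
Proof.
rewrite /cdeg -has_count => /hasP[p hp /eqP <-]; exact: (bnd_ok hp).1.
Qed.
Lemma rdeg_bnd A j : 0 < rdeg A j -> j < bnd A.
Proof.
rewrite /rdeg -has_count => /hasP[p hp /eqP <-]; exact: (bnd_ok hp).2.
Qed.

Lemma count_or T (p q : T -> bool) s : count (fun i => p i || q i) s <= count p s + count q s.
Proof. elim: s => [//|x s IH] /=; case: (p x); case: (q x) => /=; lia. Qed.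

Lemma keyK Z A a b : zero_set Z -> spans Z A ->
  (a + gA A b, b + fA A a) \notin Z.
Proof.
move=> [uZ dZ] hsp; apply/negP => hin.
pose N := bnd A.
pose S : pset := fun y => y \in A \/ a < rdeg A y.2 \/ b < cdeg A y.1.
have cl : forall T : pset, (forall y, T y -> S y) -> forall x, growT Z T x -> S x.
  move=> T hT x [/hT //|[_ hn]].
  case: (classic (S x)) => // hSx; exfalso; apply: hn.
  have ra : rdeg A x.2 <= a by case: (leqP (rdeg A x.2) a) => // h; case: hSx; right; left.
  have cb : cdeg A x.1 <= b by case: (leqP (cdeg A x.1) b) => // h; case: hSx; right; right.
  exists (size [seq (i, x.2) | i <- iota 0 N & dec (T (i, x.2))]).
  exists (size [seq (x.1, j) | j <- iota 0 N & dec (T (x.1, j))]).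
  split; last split.
  - apply: (dZ _ _ hin).
    + rewrite size_map size_filter.
      apply: (@leq_trans (count (fun i => ((i, x.2) \in A) || (b < cdeg A i)) (iota 0 N))).
        apply: sub_count => i /decR /hT [h|[h|h]] /=.
        * by rewrite h.
        * by move: h; rewrite /=; lia.
        * by rewrite h orbT.
      apply: (leq_trans (count_or _ _ _)); apply: leq_add; last by [].
      exact: (leq_trans (cnt_row A x.2) ra).
    + rewrite size_map size_filter.
      apply: (@leq_trans (count (fun j => ((x.1, j) \in A) || (a < rdeg A j)) (iota 0 N))).
        apply: sub_count => j /decR /hT [h|[h|h]] /=.
        * by rewrite h.
        * by rewrite h orbT.
        * by move: h; rewrite /=; lia.
      apply: (leq_trans (count_or _ _ _)); apply: leq_add; last by [].
      exact: (leq_trans (cnt_col A x.1) cb).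
  - exists [seq (i, x.2) | i <- iota 0 N & dec (T (i, x.2))]; split.
      by rewrite map_inj_uniq ?filter_uniq ?iota_uniq // => a1 a2 [].
    split=> // -[y1 y2]; split.
      by move=> /mapP[i]; rewrite mem_filter => /andP[/decR h _] [-> ->].
    move=> [hy /= e]; subst y2; apply/mapP; exists y1 => //.
    rewrite mem_filter mem_iota /=; apply/andP; split; first exact/decR.
    case: (hT _ hy) => [h|[h|h]].
    - by have := (bnd_ok h).1.
    - by move: h; rewrite /=; lia.
    - by apply: cdeg_bnd; move: h => /=; lia.
  - exists [seq (x.1, j) | j <- iota 0 N & dec (T (x.1, j))]; split.
      by rewrite map_inj_uniq ?filter_uniq ?iota_uniq // => a1 a2 [].
    split=> // -[y1 y2]; split.
      by move=> /mapP[j]; rewrite mem_filter => /andP[/decR h _] [-> ->].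
    move=> [hy /= e]; subst y1; apply/mapP; exists y2 => //.
    rewrite mem_filter mem_iota /=; apply/andP; split; first exact/decR.
    case: (hT _ hy) => [h|[h|h]].
    - by have := (bnd_ok h).2.
    - by apply: rdeg_bnd; move: h => /=; lia.
    - by move: h; rewrite /=; lia.
have all : forall t y, growT_iter Z t (fun y => y \in A) y -> S y.
  elim=> [|t IH] y /=; first by left.
  exact: cl.
have [t ht] := hsp (N, N).
have := all _ _ ht; case=> [h|[h|h]].
- by have := (bnd_ok h).1; rewrite /= -/N ltnn.
- have := rdeg_bnd (leq_ltn_trans (leq0n a) h); rewrite /= -/N ltnn //.
- have := cdeg_bnd (leq_ltn_trans (leq0n b) h); rewrite /= -/N ltnn //.
Qed.

Lemma sum_deg A (h : pt -> nat) : (forall p, p \in A -> h p < bnd A) ->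
  \sum_(j <- iota 0 (bnd A)) count (fun p : pt => h p == j) A <= size A.
Proof.
move=> hb.
under eq_bigr => j _ do rewrite count_sum.
rewrite exchange_big /= -sum1_size big_seq_cond [leqRHS]big_seq_cond.
apply: leq_sum => p /andP[hp _].
rewrite -count_sum.
apply: (@leq_trans (count (pred1 (h p)) (iota 0 (bnd A)))).
  by apply: sub_count => j /= /eqP ->.
by rewrite count_uniq_mem ?iota_uniq //; case: (_ \in _).
Qed.

Lemma sum_rdeg A : \sum_(j <- iota 0 (bnd A)) rdeg A j <= size A.
Proof. apply: sum_deg => p hp; exact: (bnd_ok hp).2. Qed.
Lemma sum_cdeg A : \sum_(j <- iota 0 (bnd A)) cdeg A j <= size A.
Proof. apply: sum_deg => p hp; exact: (bnd_ok hp).1. Qed.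

Lemma sumf A X : \sum_(x <- iota 0 X) fA A x./2 <= 2 * size A.
Proof.
rewrite /fA.
under eq_bigr => x _ do rewrite count_sum.
rewrite exchange_big /=.
apply: (@leq_trans (\sum_(j <- iota 0 (bnd A)) 2 * rdeg A j)); last first.
  by rewrite -big_distrr /= leq_mul2l sum_rdeg orbT.
apply: leq_sum => j _; rewrite -count_sum.
apply: (@leq_trans (count (fun x => x < (rdeg A j).*2) (iota 0 X))).
  by apply: sub_count => x /=; rewrite ltn_half_double.
rewrite -mul2n; exact: count_lt_iota.
Qed.

Lemma sumg A X : \sum_(x <- iota 0 X) count (fun b => uphalf x < gA A b) (iota 0 X) <= 2 * size A.
Proof.
under eq_bigr => x _ do rewrite count_sum.
rewrite exchange_big /=.
apply: (@leq_trans (\sum_(b <- iota 0 X) 2 * gA A b)).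
  apply: leq_sum => b _; rewrite -count_sum.
  apply: (@leq_trans (count (fun x => x < (gA A b).*2) (iota 0 X))).
    by apply: sub_count => x /=; lia.
  rewrite -mul2n; exact: count_lt_iota.
rewrite -big_distrr /= leq_mul2l; apply/orP; right.
rewrite /gA.
under eq_bigr => b _ do rewrite count_sum.
rewrite exchange_big /=.
apply: (leq_trans _ (sum_cdeg A)).
apply: leq_sum => i _; rewrite -count_sum.
exact: count_lt_iota.
Qed.

Lemma lower Z A : zero_set Z -> spans Z A -> size Z <= 4 * size A.
Proof.
move=> hZ hsp; have [uZ dZ] := hZ.
pose X := bnd Z.
pose R := flatten [seq [seq (x,y) | y <- iota 0 (fA A x./2)] ++
   [seq (x, b + fA A x./2) | b <- iota 0 X & uphalf x < gA A b] | x <- iota 0 X].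
apply: (@leq_trans (size R)).
  apply: uniq_leq_size => // -[x y] hxy.
  have [hx hy] := bnd_ok hxy; rewrite /= -/X in hx hy.
  apply/flattenP; exists ([seq (x,y) | y <- iota 0 (fA A x./2)] ++
     [seq (x, b + fA A x./2) | b <- iota 0 X & uphalf x < gA A b]).
    by apply/mapP; exists x => //; rewrite mem_iota.
  rewrite mem_cat; case: (ltnP y (fA A x./2)) => hyF.
    by apply/orP; left; apply/mapP; exists y => //; rewrite mem_iota.
  apply/orP; right; apply/mapP; exists (y - fA A x./2); last by rewrite subnK.
  rewrite mem_filter mem_iota /=; apply/andP; split; last lia.
  have := keyK (x./2) (y - fA A x./2) hZ hsp.
  rewrite subnK //; case: (ltnP (uphalf x) (gA A (y - fA A x./2))) => // hg.
  rewrite (dZ _ _ hxy) //; lia.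
rewrite size_flatten /shape -map_comp sumnE big_map.
under eq_bigr => x _ do rewrite /= size_cat !size_map size_iota size_filter.
rewrite big_split /= (_ : 4 = 2 + 2) // mulnDl.
by apply: leq_add; [apply: sumf | apply: sumg].
Qed.

Theorem mainTheorem1 (Z : seq pt) (hZ : zero_set Z) :
  (exists A : seq pt, uniq A /\ spans Z A /\ size A <= size Z) /\
  (forall A : seq pt, uniq A -> spans Z A -> size Z <= 4 * size A).
Proof.
split; first by exists Z; split; [exact: hZ.1 | split; [exact: spans_self | by []]].
move=> A _; exact: lower.
Qed.
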